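(* For $\tau\in\mathbb{R}$ and integer $n\ge0$ let $$\mu_{2n}(\tau;0)=\int_{-\infty}^{\infty}x^{2n}\exp(-x^6+\tau x^4)\,dx.$$ Then \begin{align*} \mu_{2n}(\tau;0)&=\tfrac13\Gamma\!\left(\tfrac13n+\tfrac16\right){}_2F_2\!\left(\tfrac16n+\tfrac1{12},\tfrac16n+\tfrac7{12};\tfrac13,\tfrac23;\tfrac{4\tau^3}{27}\right)+\tfrac13\tau\Gamma\!\left(\tfrac13n+\tfrac56\right){}_2F_2\!\left(\tfrac16n+\tfrac5{12},\tfrac16n+\tfrac{11}{12};\tfrac23,\tfrac43;\tfrac{4\tau^3}{27}\right)\\ &\quad+\tfrac16\tau^2\Gamma\!\left(\tfrac13n+\tfrac32\right){}_2F_2\!\left(\tfrac16n+\tfrac34,\tfrac16n+\tfrac54;\tfrac43,\tfrac53;\tfrac{4\tau^3}{27}\right). \end{align*}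
   Context: ${}_2F_2(a_1,a_2;b_1,b_2;z)$ denotes the generalised hypergeometric function with upper parameters $a_1,a_2$ and lower parameters $b_1,b_2$. *)

(* Defs.v *)
From Stdlib Require Import Reals Factorial.
From Coquelicot Require Import Coquelicot.
Open Scope R_scope.

Fixpoint poch (a : R) (k : nat) : R :=
  match k with
  | O => 1
  | S k' => poch a k' * (a + INR k')
  end.

Definition hyp2F2 (a1 a2 b1 b2 z : R) : R :=
  Series (fun k => poch a1 k * poch a2 k / (poch b1 k * poch b2 k * INR (Factorial.fact k)) * z ^ k).

Definition Gamma (s : R) : R :=
  RInt_gen (fun t => Rpower t (s - 1) * exp (- t))
           (at_right 0) (Rbar_locally p_infty).

Definition mu_integrand (tau : R) (n : nat) (x : R) : R :=
  x ^ (2 * n) * exp (- x ^ 6 + tau * x ^ 4).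

(* Main.v *)
Require Import Defs.
From Stdlib Require Import Reals Lra Lia Psatz Factorial ClassicalEpsilon.
From Coquelicot Require Import Coquelicot.
Open Scope R_scope.
Open Scope R_scope.

Fixpoint psum (g : nat -> R) (K : nat) : R :=
  match K with O => 0 | S k => psum g k + g k end.

Definition lim_infty (F : R -> R) (l : R) :=
  forall eps, 0 < eps -> exists Y, forall y, Y < y -> Rabs (F y - l) < eps.

Lemma lim_infty_unique F l1 l2 : lim_infty F l1 -> lim_infty F l2 -> l1 = l2.
Proof.
  intros H1 H2. destruct (Req_dec l1 l2) as [|Hne]; auto.
  assert (He : 0 < Rabs (l1 - l2) / 2).
  { apply Rdiv_lt_0_compat; [apply Rabs_pos_lt; lra | lra]. }
  destruct (H1 _ He) as [Y1 HY1]. destruct (H2 _ He) as [Y2 HY2].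
  set (y := Rmax Y1 Y2 + 1).
  assert (h1 := HY1 y ltac:(unfold y; generalize (Rmax_l Y1 Y2); lra)).
  assert (h2 := HY2 y ltac:(unfold y; generalize (Rmax_r Y1 Y2); lra)).
  exfalso.
  assert (Rabs (l1 - l2) <= Rabs (F y - l1) + Rabs (F y - l2)).
  { replace (l1 - l2) with (-(F y - l1) + (F y - l2)) by ring.
    eapply Rle_trans; [apply Rabs_triang|]. rewrite Rabs_Ropp. lra. }
  lra.
Qed.

Lemma lim_infty_const c : lim_infty (fun _ => c) c.
Proof. intros e He. exists 0. intros. rewrite Rminus_diag, Rabs_R0. lra. Qed.

Lemma lim_infty_plus F G a b : lim_infty F a -> lim_infty G b ->
  lim_infty (fun y => F y + G y) (a + b).
Proof.
  intros HF HG e He.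
  destruct (HF (e/2) ltac:(lra)) as [Y1 H1]. destruct (HG (e/2) ltac:(lra)) as [Y2 H2].
  exists (Rmax Y1 Y2). intros y Hy.
  assert (h1 := H1 y ltac:(generalize (Rmax_l Y1 Y2); lra)).
  assert (h2 := H2 y ltac:(generalize (Rmax_r Y1 Y2); lra)).
  replace (F y + G y - (a + b)) with ((F y - a) + (G y - b)) by ring.
  eapply Rle_lt_trans; [apply Rabs_triang|]. lra.
Qed.

Lemma lim_infty_scal F a c : lim_infty F a -> lim_infty (fun y => c * F y) (c * a).
Proof.
  intros HF e He.
  destruct (HF (e / (Rabs c + 1))) as [Y HY].
  { apply Rdiv_lt_0_compat; [lra|generalize (Rabs_pos c); lra]. }
  exists Y. intros y Hy. specialize (HY y Hy).
  replace (c * F y - c * a) with (c * (F y - a)) by ring.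
  rewrite Rabs_mult.
  assert (0 <= Rabs c) by apply Rabs_pos.
  apply Rle_lt_trans with (Rabs c * (e / (Rabs c + 1))).
  { apply Rmult_le_compat_l; lra. }
  apply Rlt_le_trans with ((Rabs c + 1) * (e / (Rabs c + 1))).
  { apply Rmult_lt_compat_r; [apply Rdiv_lt_0_compat; lra | lra]. }
  right. field. lra.
Qed.

Lemma lim_infty_ext F G l : (forall y, F y = G y) -> lim_infty F l -> lim_infty G l.
Proof. intros E H e He. destruct (H e He) as [Y HY]. exists Y. intros y Hy. rewrite <- E. auto. Qed.

Lemma lim_infty_psum (g : nat -> R -> R) (l : nat -> R) K :
  (forall k, lim_infty (g k) (l k)) ->
  lim_infty (fun y => psum (fun k => g k y) K) (psum l K).
Proof.
  intros H. induction K as [|K IH]; simpl.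
  - apply lim_infty_const.
  - apply lim_infty_plus; auto.
Qed.

Lemma mono_bounded_lim F B :
  (forall x y, 0 <= x <= y -> F x <= F y) -> (forall y, 0 <= y -> F y <= B) ->
  exists l, lim_infty F l /\ (forall y, 0 <= y -> F y <= l).
Proof.
  intros Hm Hb.
  set (E := fun v => exists y, 0 <= y /\ v = F y).
  assert (HE : bound E). { exists B. intros v [y [Hy ->]]. auto. }
  assert (HE' : exists x, E x). { exists (F 0), 0. split; [lra|auto]. }
  destruct (completeness E HE HE') as [m [Hub Hlub]].
  exists m. split.
  - intros e He.
    assert (exists y0, 0 <= y0 /\ m - e < F y0) as [y0 [Hy0 Hy0']].
    { apply NNPP. intros Hn.
      assert (is_upper_bound E (m - e)).
      { intros v [y [Hy ->]]. apply Rnot_lt_le. intros Hl. apply Hn. exists y. auto. }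
      specialize (Hlub _ H). lra. }
    exists y0. intros y Hy.
    assert (F y0 <= F y) by (apply Hm; lra).
    assert (F y <= m) by (apply Hub; exists y; split; [lra|auto]).
    rewrite Rabs_left1; lra.
  - intros y Hy. apply Hub. exists y. auto.
Qed.

Lemma psum_sum_n g K : psum g (S K) = sum_n g K.
Proof.
  induction K as [|K IH].
  - simpl. rewrite sum_O. ring.
  - rewrite sum_Sn. change (psum g (S K) + g (S K) = plus (sum_n g K) (g (S K))).
    rewrite IH. reflexivity.
Qed.

Lemma sum_n_le' (a b : nat -> R) n : (forall k, a k <= b k) -> sum_n a n <= sum_n b n.
Proof.
  intros H. induction n as [|n IH].
  - rewrite !sum_O. auto.
  - rewrite !sum_Sn. unfold plus; simpl. generalize (H (S n)). lra.
Qed.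

Lemma ser_le a b la lb : is_series a la -> is_series b lb -> (forall k, a k <= b k) -> la <= lb.
Proof.
  intros Ha Hb H.
  assert (Rbar_le (Finite la) (Finite lb)).
  { apply (is_lim_seq_le (sum_n a) (sum_n b)); [intros; apply sum_n_le'; auto| exact Ha | exact Hb]. }
  exact H0.
Qed.

Lemma ser_abs_le a b la lb : is_series a la -> is_series b lb ->
  (forall k, Rabs (a k) <= b k) -> Rabs la <= lb.
Proof.
  intros Ha Hb H. apply Rabs_le. split.
  - assert (Hb' := is_series_opp _ _ Hb).
    assert (- lb <= la).
    { apply (ser_le _ _ _ _ Hb' Ha). intros k. unfold opp; simpl.
      generalize (H k) (Rle_abs (- a k)). rewrite Rabs_Ropp. lra. }
    lra.
  - apply (ser_le _ _ _ _ Ha Hb). intros k. generalize (H k) (Rle_abs (a k)). lra.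
Qed.

Lemma exp_series y : is_series (fun k => y ^ k / INR (fact k)) (exp y).
Proof.
  generalize (is_exp_Reals y). unfold is_pseries. apply is_series_ext.
  intros k. rewrite pow_n_pow. unfold scal; simpl. unfold mult; simpl. unfold Rdiv. reflexivity.
Qed.

Lemma is_series_zero : is_series (fun _ : nat => 0) 0.
Proof.
  assert (H := is_series_scal (K:=R_AbsRing) 0 _ _ (exp_series 0)).
  change (is_series (fun n => 0 * (0 ^ n / INR (fact n))) (0 * exp 0)) in H.
  rewrite Rmult_0_l in H. eapply is_series_ext; [|exact H]. intros; simpl; ring.
Qed.

Lemma exp_tail y K : is_series (fun i => y ^ (K + i) / INR (fact (K + i)))
  (exp y - psum (fun k => y ^ k / INR (fact k)) K).
Proof.
  destruct K as [|K].
  - simpl. replace (exp y - 0) with (exp y) by ring. apply exp_series.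
  - apply (is_series_incr_n (fun k => y ^ k / INR (fact k)) (S K)). lia.
    simpl pred. rewrite <- psum_sum_n. unfold plus; simpl.
    replace (exp y - (psum (fun k : nat => y ^ k / INR (fact k)) K + y ^ K / INR (fact K)) +
      (psum (fun k : nat => y ^ k / INR (fact k)) K + y ^ K / INR (fact K))) with (exp y) by ring.
    apply exp_series.
Qed.

Lemma fact_mult_le K i : INR (fact K) * INR (fact i) <= INR (fact (K + i)).
Proof.
  induction i as [|i IH].
  - simpl. rewrite Nat.add_0_r. lra.
  - rewrite Nat.add_succ_r. rewrite !fact_simpl, !mult_INR.
    assert (0 < INR (fact i)) by (apply lt_0_INR; apply lt_O_fact).
    assert (0 < INR (fact K)) by (apply lt_0_INR; apply lt_O_fact).
    rewrite !S_INR, plus_INR.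
    assert (0 <= INR K) by apply pos_INR. assert (0 <= INR i) by apply pos_INR.
    apply Rle_trans with ((INR i + 1) * INR (fact (K + i))).
    + replace (INR (fact K) * ((INR i + 1) * INR (fact i))) with ((INR i + 1) * (INR (fact K) * INR (fact i))) by ring.
      apply Rmult_le_compat_l; lra.
    + apply Rmult_le_compat_r; [|lra]. apply pos_INR.
Qed.

Lemma exp_rem_bound y K :
  Rabs (exp y - psum (fun k => y ^ k / INR (fact k)) K) <=
  Rabs y ^ K / INR (fact K) * exp (Rabs y).
Proof.
  apply (ser_abs_le _ (fun i => Rabs y ^ K / INR (fact K) * (Rabs y ^ i / INR (fact i))) _ _ (exp_tail y K)).
  - generalize (is_series_scal (Rabs y ^ K / INR (fact K)) _ _ (exp_series (Rabs y))).
    apply is_series_ext. intros; reflexivity.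
  - intros i. rewrite Rabs_div, pow_add, Rabs_mult, <- !RPow_abs.
    2:{ apply not_0_INR, fact_neq_0. }
    rewrite (Rabs_right (INR _)) by (apply Rle_ge, pos_INR).
    assert (0 < INR (fact i)) by (apply lt_0_INR; apply lt_O_fact).
    assert (0 < INR (fact K)) by (apply lt_0_INR; apply lt_O_fact).
    assert (0 <= Rabs y ^ K) by (apply pow_le, Rabs_pos).
    assert (0 <= Rabs y ^ i) by (apply pow_le, Rabs_pos).
    generalize (fact_mult_le K i). intros Hf.
    replace (Rabs y ^ K / INR (fact K) * (Rabs y ^ i / INR (fact i))) with
      ((Rabs y ^ K * Rabs y ^ i) / (INR (fact K) * INR (fact i))) by (field; lra).
    unfold Rdiv. apply Rmult_le_compat_l; [apply Rmult_le_pos; auto|].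
    apply Rinv_le_contravar; [apply Rmult_lt_0_compat; auto | auto].
Qed.

Lemma psum_exp_nonneg u K : 0 <= u -> 0 <= psum (fun k => u ^ k / INR (fact k)) K.
Proof.
  intros Hu. induction K; simpl; [lra|].
  assert (0 < INR (fact K)) by (apply lt_0_INR; apply lt_O_fact).
  assert (0 <= u ^ K) by (apply pow_le; auto).
  assert (0 <= u ^ K / INR (fact K)) by (apply Rdiv_le_0_compat; auto). lra.
Qed.

Lemma exp_ge_term u k : 0 <= u -> u ^ k / INR (fact k) <= exp u.
Proof.
  intros Hu.
  assert (0 <= exp u - psum (fun k => u ^ k / INR (fact k)) (S k)).
  { apply (ser_le (fun _ => 0) _ 0 _ is_series_zero (exp_tail u (S k))).
    intros i. apply Rdiv_le_0_compat; [apply pow_le; auto| apply lt_0_INR, lt_O_fact]. }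
  simpl in H. generalize (psum_exp_nonneg u k Hu). lra.
Qed.

Definition f (c : R) (m : nat) (x : R) : R := x ^ m * exp (- (c * x ^ 6)).
Definition P (c : R) (m : nat) (y : R) : R := RInt (f c m) 0 y.

Lemma f_cont c m x : continuous (f c m) x.
Proof. apply (ex_derive_continuous (K:=R_AbsRing) (V:=R_NormedModule)). unfold f. auto_derive. auto. Qed.

Lemma f_exRInt c m a b : ex_RInt (f c m) a b.
Proof. apply (ex_RInt_continuous (V:=R_CompleteNormedModule)). intros; apply f_cont. Qed.

Lemma f_nonneg c m x : 0 <= x -> 0 <= f c m x.
Proof. intros. unfold f. apply Rmult_le_pos; [apply pow_le; auto | apply Rlt_le, exp_pos]. Qed.

Lemma P_mono c m x y : 0 <= x <= y -> P c m x <= P c m y.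
Proof.
  intros [Hx Hxy]. unfold P.
  rewrite <- (RInt_Chasles (f c m) 0 x y) by apply f_exRInt.
  assert (0 <= RInt (f c m) x y).
  { apply RInt_ge_0; auto. apply f_exRInt. intros; apply f_nonneg; lra. }
  unfold plus; simpl. lra.
Qed.

Lemma f_decay c m x : 0 < c -> 1 <= x ->
  f c m x <= INR (fact (m + 1)) / c ^ (m + 1) / x ^ 2.
Proof.
  intros Hc Hx. unfold f.
  assert (Hx0 : 0 < x) by lra.
  assert (HT := exp_ge_term (c * x ^ 6) (m + 1) ltac:(apply Rmult_le_pos; [lra| apply pow_le; lra])).
  assert (Hf : 0 < INR (fact (m + 1))) by (apply lt_0_INR, lt_O_fact).
  assert (Hcp : 0 < c ^ (m + 1)) by (apply pow_lt; auto).
  assert (Hxp : forall k, 0 < x ^ k) by (intros; apply pow_lt; auto).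
  rewrite exp_Ropp.
  assert (Hpow : x ^ m * x ^ 2 <= (x ^ 6) ^ (m + 1)).
  { rewrite <- pow_add, <- pow_mult. apply Rle_pow; auto. lia. }
  rewrite Rpow_mult_distr in HT.
  set (E := exp (c * x ^ 6)) in *.
  assert (HE : 0 < E) by apply exp_pos.
  set (X := (x ^ 6) ^ (m + 1)) in *.
  assert (HX : 0 < X) by (unfold X; apply pow_lt; apply pow_lt; auto).
  specialize (Hxp m) as Hm. assert (H2 := Hxp 2%nat).
  apply Rle_trans with (x ^ m * (INR (fact (m + 1)) / (c ^ (m + 1) * X))).
  - apply Rmult_le_compat_l; [lra|].
    replace (INR (fact (m + 1)) / (c ^ (m + 1) * X)) with (/ (c ^ (m + 1) * X / INR (fact (m + 1))))
      by (field; repeat split; lra).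
    apply Rinv_le_contravar; [apply Rdiv_lt_0_compat; [nra|auto] | auto].
  - unfold Rdiv. rewrite Rinv_mult.
    replace (x ^ m * (INR (fact (m + 1)) * (/ c ^ (m + 1) * / X))) with
      (INR (fact (m + 1)) * / c ^ (m + 1) * (x ^ m / X)) by (field; lra).
    apply Rmult_le_compat_l. { apply Rmult_le_pos; [lra|]. apply Rlt_le, Rinv_0_lt_compat; auto. }
    apply (Rmult_le_reg_r (X * x ^ 2)); [nra|].
    replace (x ^ m / X * (X * x ^ 2)) with (x ^ m * x ^ 2) by (field; lra).
    replace (/ x ^ 2 * (X * x ^ 2)) with X by (field; lra). auto.
Qed.

Lemma is_RInt_inv_sq K0 y : 1 <= y -> is_RInt (fun x => K0 / x ^ 2) 1 y (K0 - K0 / y).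
Proof.
  intros Hy.
  replace (K0 - K0 / y) with (minus ((fun x => - K0 / x) y) ((fun x => - K0 / x) 1))
    by (unfold minus, plus, opp; simpl; field; lra).
  apply (is_RInt_derive (V:=R_CompleteNormedModule)).
  - intros x Hx. rewrite Rmin_left, Rmax_right in Hx by lra.
    auto_derive. lra. field. lra.
  - intros x Hx. rewrite Rmin_left, Rmax_right in Hx by lra.
    apply (ex_derive_continuous (K:=R_AbsRing) (V:=R_NormedModule)). auto_derive. apply Rmult_integral_contrapositive; split; [lra|]. rewrite Rmult_1_r; lra.
Qed.

Lemma exp_le_exp x y : x <= y -> exp x <= exp y.
Proof. intros [H|H]; [left; apply exp_increasing; auto| subst; lra]. Qed.

Lemma f_le_1 c m x : 0 <= c -> 0 <= x <= 1 -> f c m x <= 1.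
Proof.
  intros Hc Hx. unfold f.
  assert (x ^ m <= 1). { rewrite <- (pow1 m). apply pow_incr. lra. }
  assert (exp (- (c * x ^ 6)) <= 1).
  { rewrite <- exp_0. apply exp_le_exp. assert (0 <= x ^ 6) by (apply pow_le; lra). nra. }
  assert (0 <= x ^ m) by (apply pow_le; lra).
  assert (0 < exp (- (c * x ^ 6))) by apply exp_pos. nra.
Qed.

Lemma P_bound c m y : 0 < c -> 0 <= y ->
  P c m y <= 1 + INR (fact (m + 1)) / c ^ (m + 1).
Proof.
  intros Hc Hy.
  set (K0 := INR (fact (m + 1)) / c ^ (m + 1)).
  assert (HK0 : 0 <= K0).
  { unfold K0. apply Rdiv_le_0_compat; [apply pos_INR| apply pow_lt; auto]. }
  assert (HP1 : P c m 1 <= 1).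
  { unfold P. assert (H := norm_RInt_le_const (f c m) 0 1 (RInt (f c m) 0 1) 1 ltac:(lra)).
    assert (H' : norm (RInt (f c m) 0 1) <= (1 - 0) * 1).
    { apply H. intros x Hx. unfold norm; simpl. unfold abs; simpl.
      rewrite Rabs_right. apply f_le_1; lra. apply Rle_ge, f_nonneg; lra.
      apply (RInt_correct (V:=R_CompleteNormedModule)). apply f_exRInt. }
    unfold norm in H'; simpl in H'; unfold abs in H'; simpl in H'.
    generalize (Rle_abs (RInt (f c m) 0 1)). lra. }
  destruct (Rle_lt_dec y 1) as [Hy1|Hy1].
  - generalize (P_mono c m y 1 ltac:(lra)). lra.
  - unfold P in *. rewrite <- (RInt_Chasles (f c m) 0 1 y) by apply f_exRInt.
    unfold plus; simpl.
    assert (RInt (f c m) 1 y <= K0 - K0 / y).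
    { apply (is_RInt_le (f c m) (fun x => K0 / x ^ 2) 1 y); [lra| |apply is_RInt_inv_sq; lra|].
      apply (RInt_correct (V:=R_CompleteNormedModule)). apply f_exRInt.
      intros x Hx. apply f_decay; auto; lra. }
    assert (0 <= K0 / y) by (apply Rdiv_le_0_compat; lra). lra.
Qed.

Lemma J_ex c m : exists l, 0 < c -> lim_infty (P c m) l /\ (forall y, 0 <= y -> P c m y <= l).
Proof.
  destruct (Rlt_dec 0 c) as [Hc|Hc].
  - destruct (mono_bounded_lim (P c m) (1 + INR (fact (m + 1)) / c ^ (m + 1))) as [l Hl].
    + intros; apply P_mono; auto.
    + intros; apply P_bound; auto.
    + exists l; auto.
  - exists 0. intros; contradiction.
Qed.

Definition J c m : R := proj1_sig (constructive_indefinite_description _ (J_ex c m)).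

Lemma J_spec c m : 0 < c -> lim_infty (P c m) (J c m) /\ (forall y, 0 <= y -> P c m y <= J c m).
Proof. unfold J. destruct (constructive_indefinite_description _ (J_ex c m)) as [l Hl]. simpl. auto. Qed.

Lemma f_lim0 c m : 0 < c -> lim_infty (f c m) 0.
Proof.
  intros Hc e He.
  set (K := INR (fact (m + 1)) / c ^ (m + 1)).
  assert (HK : 0 <= K) by (unfold K; apply Rdiv_le_0_compat; [apply pos_INR| apply pow_lt; auto]).
  exists (Rmax 1 (K / e)). intros y Hy.
  assert (Hy1 : 1 < y) by (generalize (Rmax_l 1 (K / e)); lra).
  assert (HyK : K / e < y) by (generalize (Rmax_r 1 (K / e)); lra).
  rewrite Rminus_0_r, Rabs_right by (apply Rle_ge, f_nonneg; lra).
  apply Rle_lt_trans with (K / y ^ 2). apply f_decay; auto; lra.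
  apply Rle_lt_trans with (K / y).
  - unfold Rdiv. apply Rmult_le_compat_l; auto. apply Rinv_le_contravar; [lra|]. simpl. nra.
  - apply (Rmult_lt_reg_r y); [lra|]. replace (K / y * y) with K by (field; lra).
    apply (Rmult_lt_reg_r (/ e)). apply Rinv_0_lt_compat; auto.
    replace (e * y * / e) with y by (field; lra). exact HyK.
Qed.

Lemma P_rec_pt c m y : 0 < c ->
  P c (m + 6) y = - (f c (m + 1) y) / (6 * c) + INR (m + 1) / (6 * c) * P c m y.
Proof.
  intros Hc.
  set (k := INR (m + 1) / (6 * c)).
  set (B := fun x => - (f c (m + 1) x) / (6 * c)).
  assert (HB : is_RInt (fun x => f c (m + 6) x - k * f c m x) 0 y (minus (B y) (B 0))).
  { apply (is_RInt_derive (V:=R_CompleteNormedModule)).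
    - intros x _. unfold B, f, k. auto_derive; auto.
      replace (Init.Nat.pred (m + 1)) with m by lia. rewrite !pow_add. simpl. field. lra.
    - intros x _. apply (ex_derive_continuous (K:=R_AbsRing) (V:=R_NormedModule)).
      unfold f. auto_derive. auto. }
  assert (HP : is_RInt (f c m) 0 y (P c m y)).
  { apply (RInt_correct (V:=R_CompleteNormedModule)). apply f_exRInt. }
  assert (H := is_RInt_plus _ _ _ _ _ _ HB (is_RInt_scal _ _ _ k _ HP)).
  assert (H2 : is_RInt (f c (m + 6)) 0 y (plus (minus (B y) (B 0)) (scal k (P c m y)))).
  { eapply is_RInt_ext; [|exact H]. intros x _. unfold plus, scal; simpl. unfold mult; simpl. ring. }
  unfold P at 1. rewrite (is_RInt_unique _ _ _ _ H2).
  unfold B, minus, plus, opp, scal; simpl. unfold mult; simpl.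
  unfold f at 2. rewrite pow_i by lia. field. lra.
Qed.

Lemma J_rec c m : 0 < c -> J c (m + 6) = INR (m + 1) / (6 * c) * J c m.
Proof.
  intros Hc.
  apply (lim_infty_unique (P c (m + 6))). apply J_spec; auto.
  eapply lim_infty_ext. intros y. symmetry. apply P_rec_pt; auto.
  replace (INR (m + 1) / (6 * c) * J c m) with (- 0 / (6 * c) + INR (m + 1) / (6 * c) * J c m) by (field; lra).
  apply lim_infty_plus.
  - replace (- 0 / (6 * c)) with (- / (6 * c) * 0) by (field; lra).
    eapply lim_infty_ext; [|apply (lim_infty_scal (f c (m + 1)) _ (- / (6 * c))); apply (f_lim0 c (m + 1) Hc)].
    intros y. simpl. field. lra.
  - apply lim_infty_scal. apply J_spec; auto.
Qed.

Lemma is_RInt_gen_mk (g : R -> R) (Fa Fb : (R -> Prop) -> Prop) {FFa : Filter Fa} {FFb : Filter Fb}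
  (lf : R * R -> R) (l : R) :
  filter_prod Fa Fb (fun ab => is_RInt g (fst ab) (snd ab) (lf ab)) ->
  filterlim lf (filter_prod Fa Fb) (locally l) -> is_RInt_gen g Fa Fb l.
Proof.
  intros H1 H2 Q HQ. specialize (H2 Q HQ). unfold filtermapi.
  apply filter_imp with (P := fun ab => is_RInt g (fst ab) (snd ab) (lf ab) /\ Q (lf ab)).
  - intros ab [h1 h2]. exists (lf ab). auto.
  - apply filter_and; auto.
Qed.

Lemma P_small c m y : 0 <= c -> 0 <= y <= 1 -> 0 <= P c m y <= y.
Proof.
  intros Hc Hy. split.
  - unfold P. apply RInt_ge_0; try lra. apply f_exRInt. intros; apply f_nonneg; lra.
  - unfold P. assert (H := norm_RInt_le_const (f c m) 0 y (RInt (f c m) 0 y) 1 ltac:(lra)).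
    assert (H' : norm (RInt (f c m) 0 y) <= (y - 0) * 1).
    { apply H. intros x Hx. unfold norm; simpl. unfold abs; simpl.
      rewrite Rabs_right. apply f_le_1; lra. apply Rle_ge, f_nonneg; lra.
      apply (RInt_correct (V:=R_CompleteNormedModule)). apply f_exRInt. }
    unfold norm in H'; simpl in H'; unfold abs in H'; simpl in H'.
    generalize (Rle_abs (RInt (f c m) 0 y)). lra.
Qed.

Definition gint (s t : R) : R := Rpower t (s - 1) * exp (- t).

Lemma gint_cont s t : 0 < t -> continuous (gint s) t.
Proof.
  intros Ht. apply (ex_derive_continuous (K:=R_AbsRing) (V:=R_NormedModule)).
  unfold gint, Rpower. auto_derive. auto.
Qed.

Lemma Rpower6 a : 0 < a -> (Rpower a (/6)) ^ 6 = a.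
Proof.
  intros Ha. rewrite <- Rpower_pow by apply exp_pos. rewrite Rpower_mult.
  replace (/ 6 * INR 6) with 1 by (simpl; field). apply Rpower_1; auto.
Qed.

Lemma Rpower6' y : 0 < y -> Rpower (y ^ 6) (/6) = y.
Proof.
  intros Hy. rewrite <- Rpower_pow by auto. rewrite Rpower_mult.
  replace (INR 6 * / 6) with 1 by (simpl; field). apply Rpower_1; auto.
Qed.

Lemma gint_sub m y : 0 < y ->
  6 * y ^ 5 * gint ((INR m + 1) / 6) (y ^ 6) = 6 * f 1 m y.
Proof.
  intros Hy. unfold gint, f.
  rewrite <- (Rpower_pow 6 y) by auto. rewrite Rpower_mult.
  rewrite <- (Rpower_pow 5 y) by auto. rewrite Rpower_pow by auto.
  rewrite <- (Rpower_pow m y) by auto.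
  replace (Rpower y (INR 6)) with (y ^ 6) by (rewrite Rpower_pow; auto).
  rewrite Rmult_1_l.
  replace (INR 6 * ((INR m + 1) / 6 - 1)) with (INR m + - INR 5) by (simpl; field).
  rewrite Rpower_plus. rewrite <- (Rpower_pow 5 y) by auto.
  rewrite Rpower_Ropp.
  assert (0 < Rpower y (INR 5)) by apply exp_pos.
  field. lra.
Qed.

Lemma P_diff c m u v : RInt (f c m) u v = P c m v - P c m u.
Proof.
  unfold P. assert (H := RInt_Chasles (V:=R_CompleteNormedModule) (f c m) 0 u v (f_exRInt _ _ _ _) (f_exRInt _ _ _ _)).
  change (RInt (f c m) 0 u + RInt (f c m) u v = RInt (f c m) 0 v) in H. lra.
Qed.

Lemma gamma_piece m u v : 0 < u -> 0 < v ->
  is_RInt (gint ((INR m + 1) / 6)) (u ^ 6) (v ^ 6) (6 * (P 1 m v - P 1 m u)).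
Proof.
  intros Hu Hv. set (s := (INR m + 1) / 6).
  assert (Hmin : forall x, Rmin u v <= x -> 0 < x).
  { intros x Hx. unfold Rmin in Hx. destruct (Rle_dec u v); lra. }
  assert (Hc := is_RInt_comp (V:=R_CompleteNormedModule) (gint s) (fun x => x ^ 6) (fun x => 6 * x ^ 5) u v).
  assert (Hc' : is_RInt (fun y => scal (6 * y ^ 5) (gint s (y ^ 6))) u v (RInt (gint s) (u ^ 6) (v ^ 6))).
  { apply Hc.
    - intros x Hx. apply gint_cont. apply pow_lt. apply Hmin; lra.
    - intros x Hx. split.
      + auto_derive; auto. simpl. ring.
      + apply (ex_derive_continuous (K:=R_AbsRing) (V:=R_NormedModule)). auto_derive. auto. }
  assert (H1 : is_RInt (fun y => scal (6 * y ^ 5) (gint s (y ^ 6))) u v (6 * (P 1 m v - P 1 m u))).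
  { apply (is_RInt_ext (fun y => scal 6 (f 1 m y))).
    - intros x Hx. change (6 * f 1 m x = 6 * x ^ 5 * gint s (x ^ 6)).
      unfold s. rewrite gint_sub; auto. apply Hmin. lra.
    - change (6 * (P 1 m v - P 1 m u)) with (scal 6 (P 1 m v - P 1 m u)).
      apply (is_RInt_scal (V:=R_NormedModule)). rewrite <- P_diff.
      apply (RInt_correct (V:=R_CompleteNormedModule)). apply f_exRInt. }
  assert (E := is_RInt_unique _ _ _ _ Hc'). rewrite (is_RInt_unique _ _ _ _ H1) in E.
  rewrite E. apply (RInt_correct (V:=R_CompleteNormedModule)).
  apply (ex_RInt_continuous (V:=R_CompleteNormedModule)). intros z Hz. apply gint_cont.
  assert (0 < u ^ 6) by (apply pow_lt; auto). assert (0 < v ^ 6) by (apply pow_lt; auto).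
  unfold Rmin in Hz. destruct (Rle_dec (u^6) (v^6)); lra.
Qed.

Lemma Gamma_J m : Gamma ((INR m + 1) / 6) = 6 * J 1 m.
Proof.
  unfold Gamma.
  apply is_RInt_gen_unique.
  change (fun t => Rpower t ((INR m + 1) / 6 - 1) * exp (- t)) with (gint ((INR m + 1) / 6)).
  apply (is_RInt_gen_mk _ _ _ (fun ab => 6 * (P 1 m (Rpower (snd ab) (/6)) - P 1 m (Rpower (fst ab) (/6))))).
  - exists (fun a => 0 < a) (fun b => 0 < b).
    + exists (mkposreal 1 Rlt_0_1). intros; auto.
    + exists 0. auto.
    + intros a b Ha Hb. simpl.
      rewrite <- (Rpower6 a Ha) at 1. rewrite <- (Rpower6 b Hb) at 1. apply gamma_piece; apply exp_pos.
  - apply filterlim_locally. intros eps.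
    assert (He : 0 < eps / 12) by (generalize (cond_pos eps); lra).
    destruct (proj1 (J_spec 1 m Rlt_0_1) (eps/12) He) as [Y HY].
    set (Y' := Rmax Y 1). set (d := Rmin 1 (eps/12)).
    assert (HY' : 0 < Y') by (unfold Y'; generalize (Rmax_r Y 1); lra).
    assert (Hd : 0 < d) by (unfold d; apply Rmin_glb_lt; lra).
    assert (Hd6 : 0 < d ^ 6) by (apply pow_lt; auto).
    exists (fun a => 0 < a < d ^ 6) (fun b => Y' ^ 6 < b).
    + exists (mkposreal (d ^ 6) Hd6). intros y Hy Hpos. split; auto.
      unfold ball in Hy; simpl in Hy; unfold AbsRing_ball, abs, minus, plus, opp in Hy; simpl in Hy.
      rewrite Ropp_0, Rplus_0_r, Rabs_right in Hy by lra. auto.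
    + exists (Y' ^ 6). auto.
    + intros a b [Ha Had] Hb. unfold ball; simpl; unfold AbsRing_ball; simpl; unfold abs, minus, plus, opp; simpl.
      set (u := Rpower a (/6)). set (v := Rpower b (/6)).
      assert (Hu0 : 0 < u) by apply exp_pos.
      assert (Hud : u < d).
      { unfold u. rewrite <- (Rpower6' d Hd). apply Rlt_Rpower_l; lra. }
      assert (Hv : Y' < v).
      { unfold v. rewrite <- (Rpower6' Y' HY'). apply Rlt_Rpower_l; [lra|]. split; auto. apply pow_lt; auto. }
      assert (Hd1 : d <= 1) by apply Rmin_l.
      assert (Hde : d <= eps / 12) by apply Rmin_r.
      assert (HPu := P_small 1 m u ltac:(lra) ltac:(lra)).
      assert (HPv := HY v ltac:(unfold Y' in Hv; generalize (Rmax_l Y 1); lra)).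
      replace (6 * (P 1 m v - P 1 m u) + - (6 * J 1 m)) with (6 * (P 1 m v - J 1 m) - 6 * P 1 m u) by ring.
      eapply Rle_lt_trans; [apply Rabs_triang|]. rewrite Rabs_Ropp, !Rabs_mult, Rabs_right by lra.
      rewrite (Rabs_right (P 1 m u)) by lra.
      generalize (cond_pos eps). lra.
Qed.

Definition Q tau n y := RInt (mu_integrand tau n) 0 y.
Definition QK tau n K y := psum (fun k => tau ^ k / INR (fact k) * P 1 (2 * n + 4 * k) y) K.
Definition SK tau n K x := psum (fun k => tau ^ k / INR (fact k) * f 1 (2 * n + 4 * k) x) K.

Lemma mu_cont tau n x : continuous (mu_integrand tau n) x.
Proof. apply (ex_derive_continuous (K:=R_AbsRing) (V:=R_NormedModule)). unfold mu_integrand. auto_derive. auto. Qed.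

Lemma mu_exRInt tau n a b : ex_RInt (mu_integrand tau n) a b.
Proof. apply (ex_RInt_continuous (V:=R_CompleteNormedModule)). intros; apply mu_cont. Qed.

Lemma SK_is_RInt tau n K y : is_RInt (SK tau n K) 0 y (QK tau n K y).
Proof.
  induction K as [|K IH].
  - unfold SK, QK; simpl.
    assert (H := is_RInt_const (V:=R_NormedModule) 0 y 0).
    change (is_RInt (fun _ => 0) 0 y ((y - 0) * 0)) in H. rewrite Rmult_0_r in H. exact H.
  - unfold SK, QK; simpl.
    assert (H2 : is_RInt (fun x => tau ^ K / INR (fact K) * f 1 (2 * n + 4 * K) x) 0 y
                   (tau ^ K / INR (fact K) * P 1 (2 * n + 4 * K) y)).
    { apply (is_RInt_scal (V:=R_NormedModule) (f 1 (2 * n + 4 * K)) 0 y).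
      apply (RInt_correct (V:=R_CompleteNormedModule)). apply f_exRInt. }
    apply (is_RInt_plus (V:=R_NormedModule) _ _ _ _ _ _ IH H2).
Qed.

Lemma even_pow_nonneg x n : 0 <= x ^ (2 * n).
Proof. rewrite pow_mult. apply pow_le. nra. Qed.

Lemma SK_factor tau n K x :
  SK tau n K x = x ^ (2 * n) * exp (- x ^ 6) * psum (fun k => (tau * x ^ 4) ^ k / INR (fact k)) K.
Proof.
  unfold SK. induction K as [|K IH]; cbn [psum]; [ring|].
  rewrite IH. unfold f. rewrite Rmult_1_l, pow_add, pow_mult, Rpow_mult_distr. rewrite !pow_mult. set (a1 := (x ^ 2) ^ n). set (a2 := (x ^ 4) ^ K). set (a3 := tau ^ K). field. apply INR_fact_neq_0.
Qed.

Lemma mu_factor tau n x : mu_integrand tau n x = x ^ (2 * n) * exp (- x ^ 6) * exp (tau * x ^ 4).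
Proof. unfold mu_integrand. rewrite Rmult_assoc, <- exp_plus. reflexivity. Qed.

Lemma poly_ineq t u : 0 <= t -> 0 <= u -> t * u ^ 2 <= u ^ 3 / 2 + 4 * t ^ 3.
Proof.
  intros Ht Hu. destruct (Rle_lt_dec (2 * t) u) as [H|H].
  - assert (t * u ^ 2 <= u ^ 3 / 2) by (simpl; nra). assert (0 <= t ^ 3) by (apply pow_le; auto). lra.
  - assert (u ^ 2 <= 4 * t ^ 2) by (simpl; nra).
    assert (0 <= u ^ 3) by (apply pow_le; auto). simpl in *. nra.
Qed.

Lemma pt_bound tau n K x :
  Rabs (mu_integrand tau n x - SK tau n K x) <=
  exp (4 * Rabs tau ^ 3) * (Rabs tau ^ K / INR (fact K)) * f (/2) (2 * n + 4 * K) x.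
Proof.
  set (t := Rabs tau).
  assert (Ht : 0 <= t) by apply Rabs_pos.
  rewrite mu_factor, SK_factor.
  set (A := x ^ (2 * n) * exp (- x ^ 6)).
  assert (HA : 0 <= A) by (unfold A; apply Rmult_le_pos; [apply even_pow_nonneg| apply Rlt_le, exp_pos]).
  replace (A * exp (tau * x ^ 4) - A * psum (fun k => (tau * x ^ 4) ^ k / INR (fact k)) K)
    with (A * (exp (tau * x ^ 4) - psum (fun k => (tau * x ^ 4) ^ k / INR (fact k)) K)) by ring.
  rewrite Rabs_mult, (Rabs_right A) by lra.
  assert (H4 : 0 <= x ^ 4) by (replace 4%nat with (2 * 2)%nat by reflexivity; apply even_pow_nonneg).
  assert (Habs : Rabs (tau * x ^ 4) = t * x ^ 4) by (rewrite Rabs_mult, (Rabs_right (x ^ 4)); [reflexivity| lra]).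
  assert (H1 := exp_rem_bound (tau * x ^ 4) K). rewrite Habs in H1.
  assert (Hf : 0 < INR (fact K)) by (apply lt_0_INR, lt_O_fact).
  assert (H2 : exp (t * x ^ 4) <= exp (x ^ 6 / 2 + 4 * t ^ 3)).
  { apply exp_le_exp. replace (x ^ 4) with ((x ^ 2) ^ 2) by ring. replace (x ^ 6) with ((x ^ 2) ^ 3) by ring.
    apply poly_ineq; [auto| simpl; nra]. }
  apply Rle_trans with (A * ((t * x ^ 4) ^ K / INR (fact K) * exp (x ^ 6 / 2 + 4 * t ^ 3))).
  - apply Rmult_le_compat_l; auto. eapply Rle_trans; [exact H1|].
    apply Rmult_le_compat_l; auto. apply Rdiv_le_0_compat; auto. apply pow_le. nra.
  - right. unfold A, f. rewrite exp_plus, pow_add, Rpow_mult_distr, pow_mult.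
    replace (exp (- x ^ 6)) with (exp (- (/ 2 * x ^ 6)) * exp (- (x ^ 6 / 2))).
    2:{ rewrite <- exp_plus. f_equal. field. }
    replace (exp (- (x ^ 6 / 2))) with (/ exp (x ^ 6 / 2)) by (rewrite exp_Ropp; reflexivity).
    assert (0 < exp (x ^ 6 / 2)) by apply exp_pos.
    rewrite (pow_mult x 4 K). set (p1 := (x ^ 2) ^ n). set (p2 := (x ^ 4) ^ K). set (p3 := t ^ K). field. split; [apply INR_fact_neq_0| lra].
Qed.

Lemma J_nonneg c m : 0 < c -> 0 <= J c m.
Proof.
  intros Hc. destruct (J_spec c m Hc) as [_ H]. specialize (H 0 (Rle_refl 0)).
  unfold P in H. rewrite RInt_point in H. exact H.
Qed.

Lemma Q_err tau n K y : 0 <= y ->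
  Rabs (Q tau n y - QK tau n K y) <=
  exp (4 * Rabs tau ^ 3) * (Rabs tau ^ K / INR (fact K)) * J (/2) (2 * n + 4 * K).
Proof.
  intros Hy.
  set (C := exp (4 * Rabs tau ^ 3) * (Rabs tau ^ K / INR (fact K))).
  assert (HC : 0 <= C).
  { unfold C. apply Rmult_le_pos; [apply Rlt_le, exp_pos|]. apply Rdiv_le_0_compat.
    apply pow_le, Rabs_pos. apply lt_0_INR, lt_O_fact. }
  assert (H1 : is_RInt (fun x => mu_integrand tau n x - SK tau n K x) 0 y (Q tau n y - QK tau n K y)).
  { apply (is_RInt_minus (V:=R_NormedModule)).
    apply (RInt_correct (V:=R_CompleteNormedModule)). apply mu_exRInt. apply SK_is_RInt. }
  assert (H2 : is_RInt (fun x => C * f (/2) (2 * n + 4 * K) x) 0 y (C * P (/2) (2 * n + 4 * K) y)).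
  { apply (is_RInt_scal (V:=R_NormedModule) (f (/2) (2 * n + 4 * K)) 0 y).
    apply (RInt_correct (V:=R_CompleteNormedModule)). apply f_exRInt. }
  assert (H3 := norm_RInt_le (V:=R_NormedModule) (fun x => mu_integrand tau n x - SK tau n K x)
     (fun x => C * f (/2) (2 * n + 4 * K) x) 0 y _ _ Hy (fun x _ => pt_bound tau n K x) H1 H2).
  change (Rabs (Q tau n y - QK tau n K y) <= C * P (/ 2) (2 * n + 4 * K) y) in H3.
  eapply Rle_trans; [exact H3|]. apply Rmult_le_compat_l; auto.
  apply (J_spec (/2)); auto. lra.
Qed.

Definition seq_lim (u : nat -> R) (l : R) :=
  forall eps, 0 < eps -> exists N0, forall N, (N0 <= N)%nat -> Rabs (u N - l) < eps.

Lemma ratio_bound (w : nat -> R) D : 0 <= D ->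
  (forall j, Rabs (w (S j)) <= D / INR (S j) * Rabs (w j)) ->
  forall j, Rabs (w j) <= Rabs (w 0%nat) * (D ^ j / INR (fact j)).
Proof.
  intros HD H j. induction j as [|j IH].
  - simpl. lra.
  - eapply Rle_trans; [apply H|].
    assert (0 < INR (S j)) by (apply lt_0_INR; lia).
    assert (0 < INR (fact j)) by (apply lt_0_INR, lt_O_fact).
    apply Rle_trans with (D / INR (S j) * (Rabs (w 0%nat) * (D ^ j / INR (fact j)))).
    + apply Rmult_le_compat_l; auto. apply Rdiv_le_0_compat; lra.
    + right. rewrite fact_simpl, mult_INR. simpl pow. field. lra.
Qed.

Lemma ratio_lim0 (w : nat -> R) D : 0 <= D ->
  (forall j, Rabs (w (S j)) <= D / INR (S j) * Rabs (w j)) -> seq_lim w 0.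
Proof.
  intros HD H eps He.
  assert (Hb := ratio_bound w D HD H).
  set (c := Rabs (w 0%nat) + 1).
  assert (Hc : 0 < c) by (unfold c; generalize (Rabs_pos (w 0%nat)); lra).
  destruct (cv_speed_pow_fact D (eps / c)) as [N0 HN0]. { apply Rdiv_lt_0_compat; auto. }
  exists N0. intros N HN. specialize (HN0 N ltac:(lia)). unfold R_dist in HN0.
  rewrite Rminus_0_r in HN0 |- *.
  eapply Rle_lt_trans; [apply Hb|].
  rewrite Rabs_right in HN0.
  2:{ apply Rle_ge, Rdiv_le_0_compat; [apply pow_le; auto| apply lt_0_INR, lt_O_fact]. }
  apply Rle_lt_trans with (c * (D ^ N / INR (fact N))).
  - apply Rmult_le_compat_r. apply Rdiv_le_0_compat; [apply pow_le; auto| apply lt_0_INR, lt_O_fact].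
    unfold c; lra.
  - apply (Rmult_lt_compat_l c) in HN0; auto. replace (c * (eps / c)) with eps in HN0 by (field; lra). auto.
Qed.

Lemma ratio_ex_series (w : nat -> R) D : 0 <= D ->
  (forall j, Rabs (w (S j)) <= D / INR (S j) * Rabs (w j)) -> ex_series w.
Proof.
  intros HD H. assert (Hb := ratio_bound w D HD H).
  apply (ex_series_le (V:=R_CompleteNormedModule) w (fun j => Rabs (w 0%nat) * (D ^ j / INR (fact j)))).
  - intros j. apply Hb.
  - exists (Rabs (w 0%nat) * exp D). apply (is_series_scal (K:=R_AbsRing) (V:=R_NormedModule) (Rabs (w 0%nat)) _ _ (exp_series D)).
Qed.

Lemma is_series_seq_lim a l : is_series a l -> seq_lim (fun N => psum a N) l.
Proof.
  intros H eps He.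
  destruct (proj1 (filterlim_locally (F:=eventually) (sum_n a) l) H (mkposreal eps He)) as [N0 HN0].
  exists (S N0). intros N HN. destruct N as [|N]; [lia|].
  rewrite psum_sum_n. specialize (HN0 N ltac:(lia)). exact HN0.
Qed.

Definition hterm (a1 a2 b1 b2 z : R) (k : nat) : R :=
  poch a1 k * poch a2 k / (poch b1 k * poch b2 k * INR (fact k)) * z ^ k.

Lemma poch_pos a k : 0 < a -> 0 < poch a k.
Proof.
  intros Ha. induction k; simpl; [lra|]. apply Rmult_lt_0_compat; auto.
  generalize (pos_INR k). lra.
Qed.

Lemma hterm_S a1 a2 b1 b2 z k : 0 < b1 -> 0 < b2 ->
  hterm a1 a2 b1 b2 z (S k) =
  hterm a1 a2 b1 b2 z k * ((a1 + INR k) * (a2 + INR k) * z / ((b1 + INR k) * (b2 + INR k) * INR (S k))).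
Proof.
  intros H1 H2. unfold hterm. simpl poch. rewrite fact_simpl, mult_INR. simpl pow.
  assert (0 < poch b1 k) by (apply poch_pos; auto).
  assert (0 < poch b2 k) by (apply poch_pos; auto).
  assert (0 <= INR k) by apply pos_INR.
  assert (0 < INR (fact k)) by (apply lt_0_INR, lt_O_fact).
  assert (0 < INR (S k)) by (apply lt_0_INR; lia).
  field. repeat split; lra.
Qed.

Lemma frac_le a b k : 0 < a -> 0 < b -> 0 <= k -> (a + k) / (b + k) <= 1 + a / b.
Proof.
  intros Ha Hb Hk. apply (Rmult_le_reg_r (b + k)); [lra|].
  replace ((a + k) / (b + k) * (b + k)) with (a + k) by (field; lra).
  replace ((1 + a / b) * (b + k)) with (b + k + a + a * k / b) by (field; lra).
  assert (0 <= a * k / b) by (apply Rdiv_le_0_compat; nra). lra.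
Qed.

Lemma hterm_series a1 a2 b1 b2 z : 0 < a1 -> 0 < a2 -> 0 < b1 -> 0 < b2 ->
  is_series (hterm a1 a2 b1 b2 z) (hyp2F2 a1 a2 b1 b2 z).
Proof.
  intros Ha1 Ha2 Hb1 Hb2.
  assert (E : ex_series (hterm a1 a2 b1 b2 z)).
  { apply (ratio_ex_series _ ((1 + a1 / b1) * (1 + a2 / b2) * Rabs z)).
    - apply Rmult_le_pos; [|apply Rabs_pos].
      apply Rmult_le_pos; apply Rplus_le_le_0_compat; try lra; apply Rdiv_le_0_compat; lra.
    - intros j. rewrite hterm_S by auto.
      assert (0 <= INR j) by apply pos_INR.
      assert (0 < INR (S j)) by (apply lt_0_INR; lia).
      rewrite Rabs_mult, Rmult_comm. apply Rmult_le_compat_r; [apply Rabs_pos|].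
      replace ((a1 + INR j) * (a2 + INR j) * z / ((b1 + INR j) * (b2 + INR j) * INR (S j))) with
        ((a1 + INR j) / (b1 + INR j) * ((a2 + INR j) / (b2 + INR j)) * z / INR (S j)) by (field; repeat split; lra).
      rewrite Rabs_div by lra. rewrite (Rabs_right (INR (S j))) by lra.
      apply (Rmult_le_compat_r (/ INR (S j))); [apply Rlt_le, Rinv_0_lt_compat; auto|].
      rewrite !Rabs_mult.
      apply Rmult_le_compat_r; [apply Rabs_pos|].
      assert (h1 := frac_le a1 b1 (INR j) Ha1 Hb1 H).
      assert (h2 := frac_le a2 b2 (INR j) Ha2 Hb2 H).
      assert (0 <= (a1 + INR j) / (b1 + INR j)) by (apply Rdiv_le_0_compat; lra).
      assert (0 <= (a2 + INR j) / (b2 + INR j)) by (apply Rdiv_le_0_compat; lra).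
      rewrite !Rabs_right by lra. apply Rmult_le_compat; lra. }
  unfold hyp2F2. apply Series_correct in E. exact E.
Qed.

Lemma J_rec12 c M : 0 < c ->
  J c (M + 12) = (INR M + 7) / (6 * c) * ((INR M + 1) / (6 * c)) * J c M.
Proof.
  intros Hc. replace (M + 12)%nat with (M + 6 + 6)%nat by lia.
  rewrite !J_rec by auto. rewrite !plus_INR. simpl. field. lra.
Qed.

Lemma fact3 K : INR (fact (S (S (S K)))) = INR (fact K) * ((INR K + 1) * (INR K + 2) * (INR K + 3)).
Proof. rewrite !fact_simpl, !mult_INR, !S_INR. ring. Qed.

Lemma rho_le t a NN : 0 <= t -> 0 <= a -> 0 <= NN ->
  t ^ 3 * ((2 * a + 12 * NN + 1) * (2 * a + 12 * NN + 7)) / (9 * ((3 * NN + 1) * (3 * NN + 2) * (3 * NN + 3)))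
  <= t ^ 3 * (2 * a + 19) ^ 2 / 27 / (NN + 1).
Proof.
  intros Ht Ha HN.
  assert (Ht3 : 0 <= t ^ 3) by (apply pow_le; auto).
  assert (Hd : 0 < 9 * ((3 * NN + 1) * (3 * NN + 2) * (3 * NN + 3))) by (repeat apply Rmult_lt_0_compat; lra).
  assert (h1 : 2 * a + 12 * NN + 1 <= (2 * a + 19) * (NN + 1)) by nra.
  assert (h2 : 2 * a + 12 * NN + 7 <= (2 * a + 19) * (NN + 1)) by nra.
  assert (h3 : (NN + 1) * (NN + 1) <= (3 * NN + 1) * (3 * NN + 2)) by nra.
  assert (h4 : (2 * a + 12 * NN + 1) * (2 * a + 12 * NN + 7) <= ((2 * a + 19) * (NN + 1)) * ((2 * a + 19) * (NN + 1)))
    by (apply Rmult_le_compat; lra).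
  apply Rle_trans with (t ^ 3 * (((2 * a + 19) * (NN + 1)) * ((2 * a + 19) * (NN + 1))) /
    (9 * ((3 * NN + 1) * (3 * NN + 2) * (3 * NN + 3)))).
  - unfold Rdiv. apply Rmult_le_compat_r; [apply Rlt_le, Rinv_0_lt_compat; auto|].
    apply Rmult_le_compat_l; auto.
  - replace (t ^ 3 * ((2 * a + 19) * (NN + 1) * ((2 * a + 19) * (NN + 1))) /
      (9 * ((3 * NN + 1) * (3 * NN + 2) * (3 * NN + 3)))) with
      (t ^ 3 * (2 * a + 19) ^ 2 / 27 / (NN + 1) * (3 * (NN + 1) * (NN + 1) / ((3 * NN + 1) * (3 * NN + 2)) / 3))
      by (field; repeat split; lra).
    rewrite <- (Rmult_1_r (t ^ 3 * (2 * a + 19) ^ 2 / 27 / (NN + 1))) at 2.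
    apply Rmult_le_compat_l.
    + apply Rdiv_le_0_compat; [|lra]. apply Rdiv_le_0_compat; [|lra]. apply Rmult_le_pos; auto. apply pow_le; lra.
    + apply (Rmult_le_reg_r 3); [lra|].
      replace (3 * (NN + 1) * (NN + 1) / ((3 * NN + 1) * (3 * NN + 2)) / 3 * 3) with
        (3 * ((NN + 1) * (NN + 1) / ((3 * NN + 1) * (3 * NN + 2)))) by (field; split; lra).
      replace (1 * 3) with (3 * 1) by ring. apply Rmult_le_compat_l; [lra|].
      apply (Rmult_le_reg_r ((3 * NN + 1) * (3 * NN + 2))); [nra|].
      replace ((NN + 1) * (NN + 1) / ((3 * NN + 1) * (3 * NN + 2)) * ((3 * NN + 1) * (3 * NN + 2))) with
        ((NN + 1) * (NN + 1)) by (field; split; lra). lra.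
Qed.

Definition epsq (tau : R) (n N : nat) : R :=
  Rabs tau ^ (3 * N) / INR (fact (3 * N)) * J (/2) (2 * n + 4 * (3 * N)).

Lemma epsq_lim tau n : seq_lim (epsq tau n) 0.
Proof.
  set (t := Rabs tau). assert (Ht : 0 <= t) by apply Rabs_pos.
  assert (Hn : 0 <= INR n) by apply pos_INR.
  apply (ratio_lim0 _ (t ^ 3 * (2 * INR n + 19) ^ 2 / 27)).
  { apply Rdiv_le_0_compat; [|lra]. apply Rmult_le_pos; apply pow_le; lra. }
  intros N.
  assert (HN : 0 <= INR N) by apply pos_INR.
  assert (Hpos : forall N, 0 <= epsq tau n N).
  { intros N'. unfold epsq. apply Rmult_le_pos; [apply Rdiv_le_0_compat; [apply pow_le, Rabs_pos| apply lt_0_INR, lt_O_fact]|].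
    apply J_nonneg. lra. }
  rewrite !Rabs_right by (apply Rle_ge; auto).
  assert (E : epsq tau n (S N) = epsq tau n N *
    (t ^ 3 * ((2 * INR n + 12 * INR N + 1) * (2 * INR n + 12 * INR N + 7)) /
     (9 * ((3 * INR N + 1) * (3 * INR N + 2) * (3 * INR N + 3))))).
  { unfold epsq. fold t.
    replace (3 * S N)%nat with (S (S (S (3 * N)))) by lia.
    replace (2 * n + 4 * S (S (S (3 * N))))%nat with (2 * n + 4 * (3 * N) + 12)%nat by lia.
    rewrite J_rec12 by lra. rewrite fact3.
    assert (0 < INR (fact (3 * N))) by (apply lt_0_INR, lt_O_fact).
    set (F := INR (fact (3 * N))) in *. set (JJ := J (/ 2) (2 * n + 4 * (3 * N))).
    replace (t ^ S (S (S (3 * N)))) with (t ^ (3 * N) * t ^ 3) by (simpl; ring).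
    set (tp := t ^ (3 * N)).
    rewrite !plus_INR, !mult_INR. simpl INR.
    field. repeat split; lra. }
  rewrite E, Rmult_comm. apply Rmult_le_compat_r; [auto|].
  rewrite S_INR. apply rho_le; auto.
Qed.

Definition g tau n k := tau ^ k / INR (fact k) * J 1 (2 * n + 4 * k).
Definition Tr tau n r j := g tau n (3 * j + r).

Lemma T_hyp tau n r b1 b2 : 0 < b1 -> 0 < b2 ->
  (forall x, 0 <= x -> (3 * x + INR r + 1) * (3 * x + INR r + 2) * (3 * x + INR r + 3) = 27 * (b1 + x) * (b2 + x) * (x + 1)) ->
  forall j, Tr tau n r j = Tr tau n r 0 *
    hterm ((2 * INR n + 4 * INR r + 1) / 12) ((2 * INR n + 4 * INR r + 7) / 12) b1 b2 (4 * tau ^ 3 / 27) j.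
Proof.
  intros Hb1 Hb2 Hpoly j. induction j as [|j IH].
  - unfold hterm. simpl. field.
  - rewrite hterm_S by auto. rewrite <- Rmult_assoc, <- IH.
    unfold Tr, g.
    replace (3 * S j + r)%nat with (S (S (S (3 * j + r)))) by lia.
    replace (2 * n + 4 * S (S (S (3 * j + r))))%nat with (2 * n + 4 * (3 * j + r) + 12)%nat by lia.
    rewrite J_rec12 by lra. rewrite fact3.
    assert (HJ : 0 <= INR j) by apply pos_INR.
    assert (Hf : 0 < INR (fact (3 * j + r))) by (apply lt_0_INR, lt_O_fact).
    replace ((INR (3 * j + r) + 1) * (INR (3 * j + r) + 2) * (INR (3 * j + r) + 3)) with
      (27 * (b1 + INR j) * (b2 + INR j) * (INR j + 1)).
    2:{ rewrite <- Hpoly by auto. rewrite plus_INR, mult_INR. simpl INR. ring. }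
    replace (tau ^ S (S (S (3 * j + r)))) with (tau ^ (3 * j + r) * tau ^ 3) by (simpl; ring).
    set (F := INR (fact (3 * j + r))) in *. set (JJ := J 1 (2 * n + 4 * (3 * j + r))).
    set (tp := tau ^ (3 * j + r)).
    rewrite (S_INR j). repeat rewrite ?plus_INR, ?mult_INR. simpl INR.
    field. repeat split; lra.
Qed.

Lemma regroup (h : nat -> R) N :
  psum h (3 * N) = psum (fun j => h (3 * j + 0)%nat + h (3 * j + 1)%nat + h (3 * j + 2)%nat) N.
Proof.
  induction N as [|N IH]; [reflexivity|].
  replace (3 * S N)%nat with (S (S (S (3 * N)))) by lia. cbn [psum]. rewrite IH.
  replace (3 * N + 0)%nat with (3 * N)%nat by lia.
  replace (3 * N + 1)%nat with (S (3 * N)) by lia.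
  replace (3 * N + 2)%nat with (S (S (3 * N))) by lia. ring.
Qed.

Lemma psum_plus3 A B C N : psum (fun j => A j + B j + C j) N = psum A N + psum B N + psum C N.
Proof. induction N; simpl; [ring|]. rewrite IHN. ring. Qed.

Lemma psum_ext A B N : (forall k, A k = B k) -> psum A N = psum B N.
Proof. intros H. induction N; simpl; [auto|]. rewrite IHN, H. auto. Qed.

Lemma psum_scal c A N : psum (fun j => c * A j) N = c * psum A N.
Proof. induction N; simpl; [ring|]. rewrite IHN. ring. Qed.

Lemma seq_lim_plus u v a b : seq_lim u a -> seq_lim v b -> seq_lim (fun N => u N + v N) (a + b).
Proof.
  intros Hu Hv e He. destruct (Hu (e/2) ltac:(lra)) as [N1 H1]. destruct (Hv (e/2) ltac:(lra)) as [N2 H2].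
  exists (max N1 N2). intros N HN. specialize (H1 N ltac:(lia)). specialize (H2 N ltac:(lia)).
  replace (u N + v N - (a + b)) with ((u N - a) + (v N - b)) by ring.
  eapply Rle_lt_trans; [apply Rabs_triang|]. lra.
Qed.

Lemma seq_lim_scal u a c : seq_lim u a -> seq_lim (fun N => c * u N) (c * a).
Proof.
  intros Hu e He.
  destruct (Hu (e / (Rabs c + 1))) as [N0 H0].
  { apply Rdiv_lt_0_compat; [lra|generalize (Rabs_pos c); lra]. }
  exists N0. intros N HN. specialize (H0 N HN).
  replace (c * u N - c * a) with (c * (u N - a)) by ring.
  rewrite Rabs_mult.
  assert (0 <= Rabs c) by apply Rabs_pos.
  apply Rle_lt_trans with (Rabs c * (e / (Rabs c + 1))).
  { apply Rmult_le_compat_l; lra. }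
  apply Rlt_le_trans with ((Rabs c + 1) * (e / (Rabs c + 1))).
  { apply Rmult_lt_compat_r; [apply Rdiv_lt_0_compat; lra | lra]. }
  right. field. lra.
Qed.

Definition F0 tau n := hyp2F2 (/6 * INR n + /12) (/6 * INR n + 7/12) (/3) (2/3) (4 * tau ^ 3 / 27).
Definition F1 tau n := hyp2F2 (/6 * INR n + 5/12) (/6 * INR n + 11/12) (2/3) (4/3) (4 * tau ^ 3 / 27).
Definition F2 tau n := hyp2F2 (/6 * INR n + 3/4) (/6 * INR n + 5/4) (4/3) (5/3) (4 * tau ^ 3 / 27).

Definition L2 tau n := J 1 (2 * n) * F0 tau n + tau * J 1 (2 * n + 4) * F1 tau n
  + tau ^ 2 / 2 * J 1 (2 * n + 8) * F2 tau n.

Lemma hterm_lim a1 a2 b1 b2 z : 0 < a1 -> 0 < a2 -> 0 < b1 -> 0 < b2 ->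
  seq_lim (fun N => psum (hterm a1 a2 b1 b2 z) N) (hyp2F2 a1 a2 b1 b2 z).
Proof. intros. apply is_series_seq_lim. apply hterm_series; auto. Qed.

Lemma sN_lim tau n :
  seq_lim (fun N => psum (fun j => Tr tau n 0 j + Tr tau n 1 j + Tr tau n 2 j) N) (L2 tau n).
Proof.
  assert (Hn : 0 <= INR n) by apply pos_INR.
  assert (E0 : forall j, Tr tau n 0 j = J 1 (2 * n) *
     hterm (/6 * INR n + /12) (/6 * INR n + 7/12) (/3) (2/3) (4 * tau ^ 3 / 27) j).
  { intros j. assert (Hp : forall x, 0 <= x -> (3 * x + INR 0 + 1) * (3 * x + INR 0 + 2) * (3 * x + INR 0 + 3) = 27 * ((/3) + x) * ((2/3) + x) * (x + 1)) by (intros x _; simpl; field).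
    rewrite (T_hyp tau n 0 (/3) (2/3) ltac:(lra) ltac:(lra) Hp).
    { replace ((2 * INR n + 4 * INR 0 + 1) / 12) with (/6 * INR n + /12) by (simpl; field).
      replace ((2 * INR n + 4 * INR 0 + 7) / 12) with (/6 * INR n + 7/12) by (simpl; field).
      f_equal. all: (unfold Tr, g; replace (2 * n + 4 * (3 * 0 + 0))%nat with (2 * n)%nat by lia; replace (3 * 0 + 0)%nat with 0%nat by lia; set (JJ := J 1 (2 * n)); simpl; field). } }
  assert (E1 : forall j, Tr tau n 1 j = tau * J 1 (2 * n + 4) *
     hterm (/6 * INR n + 5/12) (/6 * INR n + 11/12) (2/3) (4/3) (4 * tau ^ 3 / 27) j).
  { intros j. assert (Hp : forall x, 0 <= x -> (3 * x + INR 1 + 1) * (3 * x + INR 1 + 2) * (3 * x + INR 1 + 3) = 27 * ((2/3) + x) * ((4/3) + x) * (x + 1)) by (intros x _; simpl; field).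
    rewrite (T_hyp tau n 1 (2/3) (4/3) ltac:(lra) ltac:(lra) Hp).
    { replace ((2 * INR n + 4 * INR 1 + 1) / 12) with (/6 * INR n + 5/12) by (simpl; field).
      replace ((2 * INR n + 4 * INR 1 + 7) / 12) with (/6 * INR n + 11/12) by (simpl; field).
      f_equal. all: (unfold Tr, g; replace (2 * n + 4 * (3 * 0 + 1))%nat with (2 * n + 4)%nat by lia; replace (3 * 0 + 1)%nat with 1%nat by lia; set (JJ := J 1 (2 * n + 4)); simpl; field). } }
  assert (E2 : forall j, Tr tau n 2 j = tau ^ 2 / 2 * J 1 (2 * n + 8) *
     hterm (/6 * INR n + 3/4) (/6 * INR n + 5/4) (4/3) (5/3) (4 * tau ^ 3 / 27) j).
  { intros j. assert (Hp : forall x, 0 <= x -> (3 * x + INR 2 + 1) * (3 * x + INR 2 + 2) * (3 * x + INR 2 + 3) = 27 * ((4/3) + x) * ((5/3) + x) * (x + 1)) by (intros x _; simpl; field).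
    rewrite (T_hyp tau n 2 (4/3) (5/3) ltac:(lra) ltac:(lra) Hp).
    { replace ((2 * INR n + 4 * INR 2 + 1) / 12) with (/6 * INR n + 3/4) by (simpl; field).
      replace ((2 * INR n + 4 * INR 2 + 7) / 12) with (/6 * INR n + 5/4) by (simpl; field).
      f_equal. all: (unfold Tr, g; replace (2 * n + 4 * (3 * 0 + 2))%nat with (2 * n + 8)%nat by lia; replace (3 * 0 + 2)%nat with 2%nat by lia; set (JJ := J 1 (2 * n + 8)); simpl; field). } }
  assert (L0 := hterm_lim (/6 * INR n + /12) (/6 * INR n + 7/12) (/3) (2/3) (4 * tau ^ 3 / 27)).
  assert (L1 := hterm_lim (/6 * INR n + 5/12) (/6 * INR n + 11/12) (2/3) (4/3) (4 * tau ^ 3 / 27)).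
  assert (L2' := hterm_lim (/6 * INR n + 3/4) (/6 * INR n + 5/4) (4/3) (5/3) (4 * tau ^ 3 / 27)).
  assert (A0 : 0 < /6 * INR n + /12) by lra. assert (A1 : 0 < /6 * INR n + 7/12) by lra.
  assert (A2 : 0 < /6 * INR n + 5/12) by lra. assert (A3 : 0 < /6 * INR n + 11/12) by lra.
  assert (A4 : 0 < /6 * INR n + 3/4) by lra. assert (A5 : 0 < /6 * INR n + 5/4) by lra.
  assert (B0 : 0 < / 3) by lra. assert (B1 : 0 < 2/3) by lra. assert (B2 : 0 < 4/3) by lra. assert (B3 : 0 < 5/3) by lra.
  specialize (L0 A0 A1 B0 B1). specialize (L1 A2 A3 B1 B2). specialize (L2' A4 A5 B2 B3).
  assert (H := seq_lim_plus _ _ _ _ (seq_lim_plus _ _ _ _ (seq_lim_scal _ _ (J 1 (2 * n)) L0)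
     (seq_lim_scal _ _ (tau * J 1 (2 * n + 4)) L1)) (seq_lim_scal _ _ (tau ^ 2 / 2 * J 1 (2 * n + 8)) L2')).
  intros e He. destruct (H e He) as [N0 HN0]. exists N0. intros N HN. specialize (HN0 N HN).
  rewrite psum_plus3.
  rewrite (psum_ext _ _ N E0), (psum_ext _ _ N E1), (psum_ext _ _ N E2), !psum_scal.
  unfold L2, F0, F1, F2. exact HN0.
Qed.

Lemma Q_lim tau n : lim_infty (Q tau n) (L2 tau n).
Proof.
  intros eps He.
  set (Cst := exp (4 * Rabs tau ^ 3)).
  assert (HC : 0 < Cst) by apply exp_pos.
  destruct (epsq_lim tau n (eps / 3 / Cst)) as [N1 HN1].
  { apply Rdiv_lt_0_compat; lra. }
  destruct (sN_lim tau n (eps / 3)) as [N2 HN2]. { lra. }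
  set (N := max N1 N2).
  assert (HQK := lim_infty_psum (fun k y => tau ^ k / INR (fact k) * P 1 (2 * n + 4 * k) y) (fun k => g tau n k) (3 * N)
    (fun k => lim_infty_scal _ _ _ (proj1 (J_spec 1 _ Rlt_0_1)))).
  destruct (HQK (eps / 3) ltac:(lra)) as [Y HY].
  exists (Rmax Y 0). intros y Hy.
  assert (e1 := Q_err tau n (3 * N) y ltac:(generalize (Rmax_r Y 0); lra)).
  assert (e1' : Cst * (Rabs tau ^ (3 * N) / INR (fact (3 * N))) * J (/2) (2 * n + 4 * (3 * N)) < eps / 3).
  { specialize (HN1 N ltac:(unfold N; lia)). rewrite Rminus_0_r in HN1. unfold epsq in HN1.
    generalize (Rle_abs (Rabs tau ^ (3 * N) / INR (fact (3 * N)) * J (/ 2) (2 * n + 4 * (3 * N)))). intros.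
    rewrite Rmult_assoc. apply (Rmult_lt_compat_l Cst) in HN1; auto.
    replace (Cst * (eps / 3 / Cst)) with (eps / 3) in HN1 by (field; lra).
    apply Rle_lt_trans with (Cst * Rabs (Rabs tau ^ (3 * N) / INR (fact (3 * N)) * J (/ 2) (2 * n + 4 * (3 * N)))); auto.
    apply Rmult_le_compat_l; lra. }
  assert (e2 := HY y ltac:(generalize (Rmax_l Y 0); lra)).
  assert (e3 := HN2 N ltac:(unfold N; lia)).
  unfold Tr in e3. rewrite <- (regroup (g tau n)) in e3.
  change (psum (fun k : nat => tau ^ k / INR (fact k) * P 1 (2 * n + 4 * k) y) (3 * N)) with (QK tau n (3 * N) y) in e2.
  change (psum (fun k => g tau n k) (3 * N)) with (psum (g tau n) (3 * N)) in e2.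
  fold Cst in e1.
  replace (Q tau n y - L2 tau n) with ((Q tau n y - QK tau n (3 * N) y) + (QK tau n (3 * N) y - psum (g tau n) (3 * N))
     + (psum (g tau n) (3 * N) - L2 tau n)) by ring.
  eapply Rle_lt_trans; [apply Rabs_triang|].
  eapply Rle_lt_trans; [apply Rplus_le_compat_r; apply Rabs_triang|].
  unfold Tr in e3. lra.
Qed.

Lemma mu_even tau n x : mu_integrand tau n (- x) = mu_integrand tau n x.
Proof.
  unfold mu_integrand. rewrite !pow_mult.
  replace ((- x) ^ 2) with (x ^ 2) by ring. replace ((- x) ^ 6) with (x ^ 6) by ring.
  replace ((- x) ^ 4) with (x ^ 4) by ring. reflexivity.
Qed.

Lemma RInt_split tau n a b : RInt (mu_integrand tau n) a b = Q tau n (- a) + Q tau n b.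
Proof.
  assert (HC := RInt_Chasles (V:=R_CompleteNormedModule) (mu_integrand tau n) a 0 b (mu_exRInt _ _ _ _) (mu_exRInt _ _ _ _)).
  change (RInt (mu_integrand tau n) a 0 + RInt (mu_integrand tau n) 0 b = RInt (mu_integrand tau n) a b) in HC.
  rewrite <- HC. unfold Q at 2. f_equal.
  assert (H0 : is_RInt (mu_integrand tau n) 0 (- a) (Q tau n (- a))).
  { apply (RInt_correct (V:=R_CompleteNormedModule)). apply mu_exRInt. }
  assert (H1 := is_RInt_swap _ _ _ _ H0).
  assert (H1' : is_RInt (mu_integrand tau n) (- a) (- 0) (opp (Q tau n (- a)))) by (rewrite Ropp_0; exact H1).
  assert (H2 := is_RInt_comp_opp _ _ _ _ H1').
  assert (H3 := is_RInt_opp _ _ _ _ H2).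
  assert (H4 : is_RInt (mu_integrand tau n) a 0 (Q tau n (- a))).
  { rewrite opp_opp in H3. eapply is_RInt_ext; [|exact H3 ].
    intros x _. simpl. rewrite opp_opp. apply mu_even. }
  exact (is_RInt_unique (V:=R_CompleteNormedModule) _ _ _ _ H4).
Qed.

Theorem lemma6p10 (tau : R) (n : nat) :
  is_RInt_gen (mu_integrand tau n) (Rbar_locally m_infty) (Rbar_locally p_infty)
    (/3 * Gamma (/3 * INR n + /6)
        * hyp2F2 (/6 * INR n + /12) (/6 * INR n + 7/12) (/3) (2/3) (4 * tau ^ 3 / 27)
     + /3 * tau * Gamma (/3 * INR n + 5/6)
        * hyp2F2 (/6 * INR n + 5/12) (/6 * INR n + 11/12) (2/3) (4/3) (4 * tau ^ 3 / 27)
     + /6 * tau ^ 2 * Gamma (/3 * INR n + 3/2)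
        * hyp2F2 (/6 * INR n + 3/4) (/6 * INR n + 5/4) (4/3) (5/3) (4 * tau ^ 3 / 27)).
Proof.
  replace (/3 * INR n + /6) with ((INR (2 * n) + 1) / 6) by (rewrite mult_INR; simpl; field).
  replace (/3 * INR n + 5/6) with ((INR (2 * n + 4) + 1) / 6) by (rewrite plus_INR, mult_INR; simpl; field).
  replace (/3 * INR n + 3/2) with ((INR (2 * n + 8) + 1) / 6) by (rewrite plus_INR, mult_INR; simpl; field).
  rewrite !Gamma_J.
  change (hyp2F2 (/6 * INR n + /12) (/6 * INR n + 7/12) (/3) (2/3) (4 * tau ^ 3 / 27)) with (F0 tau n).
  change (hyp2F2 (/6 * INR n + 5/12) (/6 * INR n + 11/12) (2/3) (4/3) (4 * tau ^ 3 / 27)) with (F1 tau n).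
  change (hyp2F2 (/6 * INR n + 3/4) (/6 * INR n + 5/4) (4/3) (5/3) (4 * tau ^ 3 / 27)) with (F2 tau n).
  replace (/ 3 * (6 * J 1 (2 * n)) * F0 tau n + / 3 * tau * (6 * J 1 (2 * n + 4)) * F1 tau n +
     / 6 * tau ^ 2 * (6 * J 1 (2 * n + 8)) * F2 tau n) with (2 * L2 tau n) by (unfold L2; field).
  apply (is_RInt_gen_mk _ _ _ (fun ab => RInt (mu_integrand tau n) (fst ab) (snd ab))).
  - exists (fun _ => True) (fun _ => True).
    + exists 0. auto.
    + exists 0. auto.
    + intros a b _ _. apply (RInt_correct (V:=R_CompleteNormedModule)). apply mu_exRInt.
  - apply filterlim_locally. intros eps.
    destruct (Q_lim tau n (eps / 2)) as [Y HY]. { generalize (cond_pos eps). lra. }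
    exists (fun a => a < - Y) (fun b => Y < b).
    + exists (- Y). auto.
    + exists Y. auto.
    + intros a b Ha Hb. unfold ball; simpl; unfold AbsRing_ball; simpl; unfold abs, minus, plus, opp; simpl.
      rewrite RInt_split.
      assert (h1 := HY (- a) ltac:(lra)). assert (h2 := HY b Hb).
      replace (Q tau n (- a) + Q tau n b + - (2 * L2 tau n)) with
        ((Q tau n (- a) - L2 tau n) + (Q tau n b - L2 tau n)) by ring.
      eapply Rle_lt_trans; [apply Rabs_triang|]. lra.
Qed.
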